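(* Let $\xi$ be any DoS sequence. Then $$\mathcal{D}^{\circ}(\xi) = (\inf \mathcal{D}(\xi), 1) \quad\text{and}\quad \mathcal{F}^{\circ}(\xi) = (\inf \mathcal{F}(\xi), +\infty),$$ where $\Omega^{\circ}$ denotes the interior of a set $\Omega$.
   Context: A DoS sequence $\xi=\{H_n\}$ is a finite or infinite sequence of sets $H_n := \{h_n\}\cup[h_n,h_n+\tau_n)$, where $h_1\geqslant 0$, $\tau_n\geqslant 0$ and $h_{n+1} > h_n+\tau_n$ for all $n$ (so the $H_n$ are pairwise disjoint). If $\xi$ has only $m$ elements, the convention $h_{m+1}=h_{m+1}+\tau_{m+1}=+\infty$ is used. For $0\leqslant \tau\leqslant s$ let $\Xi(\tau,s) := \bigcup_n H_n\cap[\tau,s]$ and $n_\xi(\tau,s) := \operatorname{card}(\{h_n\}_n\cap[\tau,s])$; $\lvert\cdot\rvert$ denotes Lebesgue measure. A constant $B_d\in[0,1]$ is a duration-bound of $\xi$ if there is a constant $0<\kappa<+\infty$ with $\lvert \Xi(0,t)\rvert\leqslant \kappa + B_d t$ for all $t\geqslant 0$. A constant $B_f\in[0,+\infty)$ is a frequency-bound of $\xi$ if there is an integer $0<\Lambda<+\infty$ with $n_\xi(0,t)\leqslant \Lambda + B_f t$ for all $t\geqslant 0$; if no such finite $B_f$ exists, the frequency-bound of $\xi$ is defined to be $B_f=+\infty$. $\mathcal{D}(\xi)\subseteq[0,1]$ denotes the set of all duration-bounds of $\xi$ and $\mathcal{F}(\xi)\subseteq[0,+\infty]$ the set of all frequency-bounds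 of $\xi$. *)

(* Defs.v *)
From HB Require Import structures.
From mathcomp Require Import all_boot all_order all_algebra.
From mathcomp Require Import all_classical all_reals all_analysis.
Set Implicit Arguments. Unset Strict Implicit. Unset Printing Implicit Defensive.
Import Order.TTheory GRing.Theory Num.Theory numFieldNormedType.Exports.
Local Open Scope classical_set_scope.
Local Open Scope ring_scope.

(* A DoS sequence: finitely many (len = Some m, indices n < m) or infinitely
   many (len = None) pairs (h_n, tau_n), indexed from 0. *)
Record DoS (R : realType) := MkDoS {
  dos_len : option nat;
  dos_h : nat -> R;
  dos_tau : nat -> R;
}.

Definition dos_valid (R : realType) (xi : DoS R) (n : nat) : Prop :=
  match dos_len xi with Some m => (n < m)%N | None => True end.

Definition is_DoS (R : realType) (xi : DoS R) : Prop :=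
  (dos_valid xi 0 -> 0 <= dos_h xi 0) /\
  (forall n, dos_valid xi n -> 0 <= dos_tau xi n) /\
  (forall n, dos_valid xi n.+1 -> dos_h xi n + dos_tau xi n < dos_h xi n.+1).

Definition Hset (R : realType) (xi : DoS R) (n : nat) : set R :=
  [set dos_h xi n] `|` [set x | dos_h xi n <= x < dos_h xi n + dos_tau xi n].

Definition Xi (R : realType) (xi : DoS R) (a s : R) : set R :=
  [set x | exists2 n, dos_valid xi n & Hset xi n x] `&` [set x | a <= x <= s].

Definition n_xi (R : realType) (xi : DoS R) (a s : R) : \bar R :=
  @counting R R [set x | (exists2 n, dos_valid xi n & x = dos_h xi n) /\ a <= x <= s].

Definition is_duration_bound (R : realType) (xi : DoS R) (Bd : R) : Prop :=
  0 <= Bd <= 1 /\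
  exists kappa : R, 0 < kappa /\
    forall t : R, 0 <= t ->
      (lebesgue_measure (Xi xi 0 t) <= (kappa + Bd * t)%:E)%E.

Definition is_finite_frequency_bound (R : realType) (xi : DoS R) (Bf : R) : Prop :=
  0 <= Bf /\
  exists Lambda : nat, (0 < Lambda)%N /\
    forall t : R, 0 <= t -> (n_xi xi 0 t <= (Lambda%:R + Bf * t)%:E)%E.

Definition Dset (R : realType) (xi : DoS R) : set R := is_duration_bound xi.

Definition Fset (R : realType) (xi : DoS R) : set (\bar R) :=
  [set b | (exists2 r : R, is_finite_frequency_bound xi r & b = r%:E) \/
           (b = +oo%E /\ ~ exists r : R, is_finite_frequency_bound xi r)].

(* Main.v *)
Require Import Defs.
From HB Require Import structures.
From mathcomp Require Import all_boot all_order all_algebra.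
From mathcomp Require Import all_classical all_reals all_analysis.
From mathcomp Require Import lra.
Import Order.TTheory GRing.Theory Num.Theory numFieldNormedType.Exports.
Local Open Scope classical_set_scope.
Local Open Scope ring_scope.

Lemma intD (R : realType) (S : set R) : S !=set0 -> (forall x, S x -> 0 <= x <= 1) ->
  (forall x y, S x -> x <= y -> y <= 1 -> S y) -> interior S = [set x | inf S < x < 1].
Proof.
move=> S0 H up.
have lb : has_lbound S by exists 0 => x /H /andP[].
apply/seteqP; split => x.
- move=> /nbhs_ballP [e /= e0 He].
  have h1 : S (x - e/2) by apply: He; rewrite ball_itv /= in_itv /=; apply/andP; split; lra.
  have h2 : S (x + e/2) by apply: He; rewrite ball_itv /= in_itv /=; apply/andP; split; lra.
  have h3 := ge_inf lb h1; have /andP[_ h4] := H _ h2.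
  apply/andP; split; lra.
- move=> /andP [ax x1]. have [s Ss sx] := inf_lt S0 ax.
  apply/nbhs_ballP; exists (Num.min (x - s) (1 - x)) => /=.
    by rewrite lt_min; apply/andP; split; lra.
  move=> y; rewrite ball_itv /= in_itv /= => /andP[y1 y2].
  have e1 : Num.min (x - s) (1 - x) <= x - s by rewrite ge_min lexx.
  have e2 : Num.min (x - s) (1 - x) <= 1 - x by rewrite ge_min lexx orbT.
  apply: (up s) => //; lra.
Qed.

Lemma intF (R : realType) (S : set R) : S !=set0 -> (forall x, S x -> 0 <= x) ->
  (forall x y, S x -> x <= y -> S y) -> interior S = [set x | inf S < x].
Proof.
move=> S0 H up.
have lb : has_lbound S by exists 0 => x /H.
apply/seteqP; split => x.
- move=> /nbhs_ballP [e /= e0 He].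
  have h1 : S (x - e/2) by apply: He; rewrite ball_itv /= in_itv /=; apply/andP; split; lra.
  have h3 := ge_inf lb h1.
  rewrite /=; lra.
- move=> /= ax. have [s Ss sx] := inf_lt S0 ax.
  apply/nbhs_ballP; exists (x - s) => /=; first lra.
  move=> y; rewrite ball_itv /= in_itv /= => /andP[y1 y2].
  apply: (up s) => //; lra.
Qed.

Theorem proposition1 (R : realType) (xi : DoS R) :
  is_DoS xi ->
  interior (Dset xi) = [set x : R | inf (Dset xi) < x < 1] /\
  interior [set r : R | Fset xi r%:E] =
    [set x : R | (ereal_inf (Fset xi) < x%:E < +oo)%E].
Proof.
move=> _; split.
- apply: intD.
  + exists 1; split; first by rewrite ler01 lexx.
    exists 1; split => // t t0.
    have sub : Xi xi 0 t `<=` (`[0%R, t]%classic : set R).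
      by move=> x [_ /= hx]; rewrite in_itv /=.
    have hle : (lebesgue_measure (Xi xi 0 t) <= lebesgue_measure (`[0%R,t]%classic : set R))%E.
      rewrite /lebesgue_measure /lebesgue_stieltjes_measure /measure_extension.
      exact: le_outer_measure.
    apply: (le_trans hle); rewrite lebesgue_measure_itv /=.
    case: ifP => _; rewrite lee_fin; lra.
  + by move=> x [].
  + move=> x y [/andP[x0 x1] [k [k0 hk]]] xy y1; split.
      by apply/andP; split => //; lra.
    exists k; split => // t t0; apply: (le_trans (hk t t0)); rewrite lee_fin.
    have : x * t <= y * t by apply: ler_wpM2r.
    lra.
- have FE : [set r : R | Fset xi r%:E] = is_finite_frequency_bound xi.
    apply/seteqP; split => r /=.
    + by case=> [[r' hr' [->]] | [] //].
    + by move=> hr; left; exists r.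
  rewrite FE.
  have up : forall x y, is_finite_frequency_bound xi x -> x <= y ->
      is_finite_frequency_bound xi y.
    move=> x y [x0 [L [L0 hL]]] xy; split; first lra.
    exists L; split => // t t0; apply: (le_trans (hL t t0)); rewrite lee_fin.
    have : x * t <= y * t by apply: ler_wpM2r.
    lra.
  have [[r0 hr0]|none] := pselect (exists r, is_finite_frequency_bound xi r).
  + have S0 : is_finite_frequency_bound xi !=set0 by exists r0.
    have lb : has_lbound (is_finite_frequency_bound xi) by exists 0 => x [].
    have FE2 : Fset xi = [set x%:E | x in is_finite_frequency_bound xi].
      apply/seteqP; split => b /=.
      * case=> [[r hr ->] | [_ []]]; last by exists r0.
        by exists r.
      * by case=> r hr <-; left; exists r.
    rewrite FE2 ereal_inf_EFin // intF //; last by move=> x [].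
    apply/seteqP; split => x /=.
    * by move=> h; rewrite lte_fin h ltry.
    * by rewrite lte_fin => /andP[].
  + have E0 : is_finite_frequency_bound xi = set0.
      by apply/seteqP; split => // r hr; apply: none; exists r.
    have FE2 : Fset xi = [set +oo%E].
      apply/seteqP; split => b /=.
      * by case=> [[r hr _] | [-> _]] //; exfalso; apply: none; exists r.
      * by move=> ->; right.
    rewrite E0 FE2 ereal_inf1.
    apply/seteqP; split => x /=.
    * by move=> /nbhs_ballP [e /= e0 He]; exfalso; apply: (He x); exact: ballxx.
    * by [].
Qed.
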